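(* For every $\epsilon>0$ there is $N=N(\epsilon)$ such that every connected graph $G=(V,E)$ with $n>N$ vertices and minimum degree at least $\epsilon n$ satisfies the following. There is a partition of $V$ into $k\le N$ sets $V_1,\ldots,V_k$ and an edge coloring $\chi:E\to\mathcal C$, where $\mathcal C=\{a_1,a_2,a_3,a_4,b_1,b_2,b_3,b_4\}$ is a set of eight distinct colors, such that for every $i\in[k]$ and every $u,v\in V_i$, the pair $u,v$ is both $a$-rainbow connected and $b$-rainbow connected under $\chi$.
   Context: All graphs are finite, simple and undirected. A path is rainbow if its edges have pairwise distinct colors. Under a coloring $\chi:E\to\mathcal C$, vertices $u,v$ are $a$-rainbow connected if there is a rainbow path from $u$ to $v$ all of whose edges have colors in $\{a_1,a_2,a_3,a_4\}$, and $b$-rainbow connected if there is a rainbow path from $u$ to $v$ all of whose edges have colors in $\{b_1,b_2,b_3,b_4\}$. *)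

(* Defs.v *)
From HB Require Import structures.
From mathcomp Require Import all_boot all_order all_algebra.
From mathcomp Require Import reals.
Set Implicit Arguments. Unset Strict Implicit. Unset Printing Implicit Defensive.
Import Order.TTheory GRing.Theory Num.Theory.

(* Colours: 'I_8, with a_1..a_4 = 0,1,2,3 and b_1..b_4 = 4,5,6,7. *)
Definition colour := 'I_8.
Definition is_a_colour (c : colour) : bool := (val c < 4)%N.
Definition is_b_colour (c : colour) : bool := (4 <= val c)%N.

Definition simple_graph (T : finType) (e : rel T) : Prop :=
  symmetric e /\ irreflexive e.

Definition connected_graph (T : finType) (e : rel T) : Prop :=
  forall x y : T, connect e x y.

Definition degree (T : finType) (e : rel T) (x : T) : nat := #|[set y | e x y]|.

(* An edge colouring: a colour for each (unordered) pair, only relevant on edges. *)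
Definition edge_colouring (T : finType) (chi : T -> T -> colour) : Prop :=
  forall x y, chi x y = chi y x.

Definition rainbow_connected_in (T : finType) (e : rel T) (chi : T -> T -> colour)
  (P : pred colour) (u v : T) : Prop :=
  exists p : seq T,
    [&& path e u p, last u p == v, uniq (u :: p),
        uniq (pairmap chi u p) & all P (pairmap chi u p)].

Definition a_rainbow_connected (T : finType) e chi (u v : T) :=
  @rainbow_connected_in T e chi is_a_colour u v.
Definition b_rainbow_connected (T : finType) e chi (u v : T) :=
  @rainbow_connected_in T e chi is_b_colour u v.

(* Main.v *)
Require Import Defs.
From HB Require Import structures.
From mathcomp Require Import all_boot all_order all_algebra.
From mathcomp Require Import reals.
From mathcomp Require Import zify.
Import Order.TTheory GRing.Theory Num.Theory.
Set Implicit Arguments. Unset Strict Implicit. Unset Printing Implicit Defensive.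

Lemma card_bad (T : finType) (k : nat) (S : {set T}) (c : 'I_k.+1) :
  #|[pred f : {ffun T -> 'I_k.+1} | [forall q in S, f q != c]]| = k ^ #|S| * k.+1 ^ #|~: S|.
Proof.
pose F (q : T) : pred 'I_k.+1 := if q \in S then predC1 c else predT.
have -> : #|[pred f : {ffun T -> 'I_k.+1} | [forall q in S, f q != c]]| = #|(family F : simpl_pred {ffun T -> 'I_k.+1})|.
  apply: eq_card => f; rewrite !inE; apply/forallP/familyP => H q; have := H q; rewrite /F.
    by case: (q \in S) => //= /implyP.
  by case: (q \in S) => //=.
rewrite card_family foldrE big_map big_enum /=.
rewrite (bigID (fun x => x \in S)) /=.
rewrite (eq_bigr (fun _ => k)); last first.
  move=> i Hi; rewrite /F Hi cardC1 card_ord //.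
rewrite [X in _ * X](eq_bigr (fun _ => k.+1)); last first.
  move=> i Hi; rewrite /F (negbTE Hi); apply: card_ord.
rewrite !prod_nat_const; congr (_ ^ _ * _ ^ _); apply: eq_card => x; rewrite !inE //.
Qed.

Lemma good_colouring (T : finType) (k t : nat) (S : T -> {set T}) :
  (forall p, t <= #|S p|) -> #|T| * k.+1 * k ^ t < k.+1 ^ t ->
  exists h : T -> 'I_k.+1, forall p c, exists2 q, q \in S p & h q = c.
Proof.
move=> HS Hn.
case: (pickP T) => [x0 _|H0]; last first.
  by exists (fun _ => ord0) => p; have := H0 p.
have tn : t <= #|T| by apply: leq_trans (HS x0) (max_card _).
pose bad p c (f : {ffun T -> 'I_k.+1}) := [forall q in S p, f q != c].
have Hb p c : #|[pred f | bad p c f]| <= k ^ t * k.+1 ^ (#|T| - t).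
  rewrite card_bad.
  have := HS p; have := cardsC (S p); set a := #|S p|; set b := #|~: S p| => Hab Hta.
  have -> : #|T| - t = (a - t) + b by lia.
  rewrite expnD -{1}(subnKC Hta) expnD -mulnA leq_mul2l; apply/orP; right.
  rewrite leq_mul2r; apply/orP; right.
  by case: (a - t) => [|d] //; rewrite leq_exp2r.
have [f Hf] : exists f : {ffun T -> 'I_k.+1}, [forall p, forall c, ~~ bad p c f].
  apply/existsP; apply: contraLR Hn; rewrite negb_exists => /forallP Hall.
  rewrite -leqNgt.
  have E p c : \sum_f (bad p c f : nat) = #|[pred f | bad p c f]|.
    by rewrite -sum1_card [RHS]big_mkcond; apply: eq_bigr => f _; rewrite inE; case: (bad p c f).
  have H1 : k.+1 ^ #|T| <= \sum_p \sum_c #|[pred f | bad p c f]|.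
    have -> : k.+1 ^ #|T| = #|{ffun T -> 'I_k.+1}| by rewrite card_ffun card_ord.
    rewrite -sum1_card.
    under [X in _ <= X]eq_bigr => p _ do under eq_bigr => c _ do rewrite -E.
    rewrite [X in _ <= X](eq_bigr (fun p => \sum_f \sum_c (bad p c f : nat))); last by move=> p _; rewrite exchange_big.
    rewrite exchange_big /=; apply: leq_sum => f _.
    have := Hall f; rewrite negb_forall => /existsP [p]; rewrite negb_forall => /existsP [c].
    rewrite negbK => Hpc.
    rewrite (bigD1 p) //= (bigD1 c) //= Hpc; lia.
  have H2 : \sum_p \sum_c #|[pred f | bad p c f]| <= #|T| * k.+1 * (k ^ t * k.+1 ^ (#|T| - t)).
    apply: (@leq_trans (\sum_(p : T) (k.+1 * (k ^ t * k.+1 ^ (#|T| - t))))).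
      apply: leq_sum => p _.
      apply: (@leq_trans (\sum_(c < k.+1) (k ^ t * k.+1 ^ (#|T| - t)))); first by apply: leq_sum => c _; apply: Hb.
      by rewrite sum_nat_const card_ord.
    by rewrite sum_nat_const mulnA.
  have H3 : k.+1 ^ #|T| = k.+1 ^ t * k.+1 ^ (#|T| - t) by rewrite -expnD subnKC.
  rewrite H3 in H1.
  have H4 := leq_trans H1 H2; rewrite mulnA leq_pmul2r ?expn_gt0 // in H4.
have Hf' p c : ~~ bad p c f by move: Hf => /forallP /(_ p) /forallP /(_ c).
exists f => p c; have := Hf' p c; rewrite negb_forall => /existsP [q].
by rewrite negb_imply negbK => /andP [Hq /eqP Hfq]; exists q.
Qed.

Lemma bern r : 11 ^ r * (11 + r) <= 11 * 12 ^ r.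
Proof.
elim: r => [|r IH] //.
have H : 11 ^ r <= 12 ^ r by case: r IH => // r _; rewrite leq_exp2r.
rewrite !expnS; nia.
Qed.

Lemma arith m n : 0 < m -> 4 * m * m*(2*(1452*(4 * m * m)*(2 * m+5))+2 * m) <= n ->
  n * 12 * 11 ^ (2 * ((n %/ (4 * m * m) - 2 * m) %/ 2)) < 12 ^ (2 * ((n %/ (4 * m * m) - 2 * m) %/ 2)).
Proof.
move=> m0 Hn.
set M := 4 * m * m. set R := 1452 * M*(2 * m+5).
set s := n %/ M. set r := (s - 2 * m) %/ 2.
have M0 : 0 < M by rewrite /M !muln_gt0 m0.
have Hs : n = s * M + n %% M by rewrite /s -divn_eq.
have HsM : n %% M < M by rewrite ltn_mod.
have Hr : s - 2 * m = r * 2 + (s - 2 * m) %% 2 by rewrite /r -divn_eq.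
have Hr2 : (s - 2 * m) %% 2 < 2 by rewrite ltn_mod.
have sge : 2 * R + 2 * m <= s.
  by rewrite /s leq_divRL // mulnC.
have rge : R <= r by lia.
have R1 : 1 <= R by rewrite /R /M !muln_gt0 m0 /= addn_gt0 orbT.
have r1 : 1 <= r by apply: leq_trans rge.
have h1 : n < M * (2 * r + 2 * m + 2).
  have : s + 1 <= 2 * r + 2 * m + 2 by lia.
  move=> /(leq_mul (leqnn M)); rewrite mulnDr muln1.
  move: Hs HsM; rewrite [s * M]mulnC; lia.
have h2 : 2 * r + 2 * m + 2 <= r * (2 * m+5).
  rewrite mulnDr; have : 1 * (2 * m) <= r * (2 * m) by rewrite leq_mul2r r1 orbT.
  lia.
have h3 : 1452 * n < r * R.
  apply: (@leq_trans (1452 * (M * (2 * r+2 * m+2)))); first by rewrite ltn_mul2l /=.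
  have -> : r * R = 1452 * (M * (r * (2 * m+5))) by rewrite /R; lia.
  by rewrite leq_mul2l /= leq_mul2l h2 orbT.
have key : 1452 * n < (11 + r) ^ 2.
  apply: (leq_trans h3); apply: (@leq_trans (r * r)); first by rewrite leq_mul2l rge orbT.
  by rewrite -mulnn leq_mul // leq_addl.
have B2 : 11 ^ (2 * r) * (11 + r) ^ 2 <= 121 * 12 ^ (2 * r).
  have := leq_mul (bern r) (bern r).
  rewrite -!mulnn.
  have -> : 11 ^ (2 * r) = 11 ^ r * 11 ^ r by rewrite mul2n -addnn expnD.
  have -> : 12 ^ (2 * r) = 12 ^ r * 12 ^ r by rewrite mul2n -addnn expnD.
  move=> H; lia.
rewrite -(ltn_pmul2l (_ : 0 < 121)) //.
apply: leq_trans B2.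
have P : 0 < 11 ^ (2 * r) by rewrite expn_gt0.
rewrite -/r.
have -> : 121 * (n * 12 * 11 ^ (2 * r)) = 11 ^ (2 * r) * (1452 * n) by lia.
by rewrite ltn_pmul2l.
Qed.

Lemma sub_card (T : finType) (Y : {set T}) K : K <= #|Y| ->
  exists2 Z : {set T}, Z \subset Y & #|Z| = K.
Proof.
move=> HK; exists [set x in take K (enum Y)].
  by apply/subsetP => x; rewrite inE => /mem_take; rewrite mem_enum.
rewrite cardsE (card_uniqP _); last by apply: take_uniq; apply: enum_uniq.
by rewrite size_take -cardE; move: HK; rewrite leq_eqVlt => /orP [/eqP ->|->]; rewrite ?ltnn.
Qed.

Lemma pair_count (T : finType) (e : rel T) (Z : {set T}) (w : T) :
  \sum_(y in Z) (e y w : nat) <= 1 + \sum_(y in Z) \sum_(y' in Z | y' != y) ((e y w && e y' w) : nat).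
Proof.
case: (pickP [pred y in Z | e y w]) => [y0 /andP [Hy0 Ey0]|H0]; last first.
  rewrite big1 // => y Hy; have := H0 y; rewrite /= Hy /=; by move=> ->.
rewrite (bigD1 y0) //= Ey0 add1n ltnS (bigD1 y0 Hy0) /= Ey0 /=.
apply: leq_trans (leq_addr _ _).
rewrite [X in _ <= X](eq_bigl (fun y => (y \in Z) && (y != y0))); last by move=> y; rewrite andbC.
by [].
Qed.

Lemma few_centers (T : finType) (e : rel T) (m s : nat) (Y : {set T}) :
  0 < m -> 0 < s -> 4 * m * m * s <= #|T| ->
  (forall x, #|T| <= m * #|[set y | e x y]|) ->
  {in Y &, forall x y, x != y -> #|[set w | e x w] :&: [set w | e y w]| < s} ->
  #|Y| < 2 * m.
Proof.
move=> m0 s0 Hs Hdeg Hpw; rewrite ltnNge; apply/negP => HY.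
have [Z ZY cZ] := sub_card HY.
set n := #|T|.
have A : \sum_(y in Z) #|[set w | e y w]| = \sum_w \sum_(y in Z) (e y w : nat).
  rewrite exchange_big /=; apply: eq_bigr => y _.
  by rewrite -sum1_card [LHS]big_mkcond; apply: eq_bigr => w _; rewrite inE; case: (e y w).
have C : \sum_w \sum_(y in Z) \sum_(y' in Z | y' != y) ((e y w && e y' w) : nat)
         <= #|Z| * (#|Z| * (s - 1)).
  rewrite exchange_big /=.
  apply: (@leq_trans (\sum_(y in Z) (#|Z| * (s - 1)))); last by rewrite sum_nat_const.
  apply: leq_sum => y Hy; rewrite exchange_big /=.
  apply: (@leq_trans (\sum_(y' in Z) (s - 1))); last by rewrite sum_nat_const.
  rewrite [X in _ <= X](bigD1 y) //=; apply: leq_trans (leq_addl _ _).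
  apply: leq_sum => y' /andP [Hy' ny].
  have := Hpw y y' (subsetP ZY _ Hy) (subsetP ZY _ Hy'); rewrite eq_sym ny => /(_ isT) Hc.
  have -> : \sum_w ((e y w && e y' w) : nat) = #|[set w | e y w] :&: [set w | e y' w]|.
    by rewrite -sum1_card [RHS]big_mkcond; apply: eq_bigr => w _; rewrite !inE; case: (e y w && e y' w).
  lia.
have B : \sum_w \sum_(y in Z) (e y w : nat) <= n + #|Z| * (#|Z| * (s - 1)).
  apply: leq_trans (leq_add (leqnn n) C).
  have -> : n = \sum_(w : T) 1 by rewrite sum1_card.
  rewrite -big_split /=; apply: leq_sum => w _; exact: pair_count.
have D : #|Z| * n <= m * \sum_(y in Z) #|[set w | e y w]|.
  rewrite big_distrr /= -sum_nat_const; apply: leq_sum => y _; exact: Hdeg.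
rewrite A in D; have E := leq_trans D (leq_mul (leqnn m) B).
rewrite cZ in E.
have F : 2 * n <= n + 2 * m * (2 * m * (s - 1)).
  by rewrite -(leq_pmul2l m0); move: E; rewrite mulnDr; lia.
have G : 2 * m * (2 * m * (s - 1)) < n.
  have -> : 2 * m * (2 * m * (s - 1)) = 4 * m * m * s - 4 * m * m * 1 by rewrite mulnBr; lia.
  have : 0 < 4 * m * m * 1 by rewrite muln1 !muln_gt0 m0.
  lia.
lia.
Qed.

Lemma neq_of_edge (T : finType) (e : rel T) a b : irreflexive e -> e a b -> a != b.
Proof. by move=> irr Hab; apply/eqP => Eab; rewrite Eab irr in Hab. Qed.

Lemma path4 (T : finType) (e : rel T) (chi : T -> T -> colour) (P : pred colour) u v x q1 q2 :
  symmetric e -> irreflexive e -> (forall a b, chi a b = chi b a) ->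
  e u q1 -> e q1 x -> e x q2 -> e q2 v ->
  u != x -> v != x -> q1 != q2 ->
  uniq [:: chi u q1; chi q1 x; chi x q2; chi q2 v] ->
  all P [:: chi u q1; chi q1 x; chi x q2; chi q2 v] ->
  rainbow_connected_in e chi P u v.
Proof.
move=> sym irr csym E1 E2 E3 E4 ux vx q12 U A.
case: (eqVneq u v) => [<-|uv].
  by exists [::]; rewrite /= eqxx.
case: (eqVneq q1 v) => [Eq1|q1v].
  subst v; exists [:: q1]; rewrite /= E1 eqxx /= andbT inE (neq_of_edge irr E1) /=.
  by move: A => /= /andP [->].
case: (eqVneq q2 u) => [Eq2|q2u].
  subst u; exists [:: v]; rewrite /= E4 eqxx /= andbT inE (neq_of_edge irr E4) /=.
  by move: A => /= /and4P [_ _ _]; rewrite andbT.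
exists [:: q1; x; q2; v]; rewrite /= E1 E2 E3 E4 eqxx /=.
move: U A => /= -> ->; rewrite !andbT !inE.
have n1 := neq_of_edge irr E1; have n2 := neq_of_edge irr E2.
have n3 := neq_of_edge irr E3; have n4 := neq_of_edge irr E4.
rewrite (negbTE n1) (negbTE ux) (negbTE uv) (negbTE q12) (negbTE q1v) (negbTE n2) (negbTE n3) n4.
by rewrite eq_sym (negbTE q2u) eq_sym (negbTE vx).
Qed.

Lemma gam_asym a b : a < 3 -> b < 3 -> a == b.+1 %% 3 -> b == a.+1 %% 3 -> False.
Proof. by case: a => [|[|[|a]]] //; case: b => [|[|[|b]]]. Qed.

Lemma gam_not2 a : a < 3 -> a == ((a.+1 %% 3).+1 %% 3) = false.
Proof. by case: a => [|[|[|a]]]. Qed.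

Definition Nval (m : nat) := 4 * m * m*(2*(1452*(4 * m * m)*(2 * m+5))+2 * m).

Definition cen (l : nat) := if l < 2 then l else l + 2.
Definition lnk (l : nat) := cen l + 2.

Lemma main_nat (m : nat) (T : finType) (e : rel T) :
  0 < m -> symmetric e -> irreflexive e -> Nval m < #|T| ->
  (forall x, #|T| <= m * degree e x) ->
  exists (P : {set {set T}}) (chi : T -> T -> colour),
    [/\ partition P [set: T], (#|P| <= Nval m)%N, edge_colouring chi &
      forall A, A \in P -> forall u v, u \in A -> v \in A ->
        a_rainbow_connected e chi u v /\ b_rainbow_connected e chi u v].
Proof.
move=> m0 sym irr Hn Hd.
set n := #|T|. set M := 4 * m * m. set s := n %/ M.
have M0 : 0 < M by rewrite /M !muln_gt0 m0.
have mm : 0 < m * m by rewrite muln_gt0 m0.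
have M4 : 4 <= M by rewrite /M -mulnA; lia.
have MN : M <= Nval m.
  rewrite /Nval -/M -[X in X <= _]muln1 leq_mul2l; apply/orP; right; lia.
have sM : s * M <= n by apply: leq_trunc_div.
have s0 : 0 < s by rewrite /s divn_gt0 //; apply: leq_trans MN (ltnW Hn).
have Hs : 4 * m * m * s <= n by rewrite mulnC.
have sn : s <= n by apply: leq_trans sM; rewrite -[X in X <= _]muln1 leq_mul2l M0 orbT.
pose Nb (x : T) := [set w | e x w].
pose pw (Y : {set T}) := [forall x in Y, forall y in Y, (x != y) ==> (#|Nb x :&: Nb y| < s)].
have pw0 : pw set0 by apply/forall_inP => x; rewrite inE.
have [X maxX _] := maxset_exists pw0.
have pwX : {in X &, forall x y, x != y -> #|Nb x :&: Nb y| < s}.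
  move=> x y Hx Hy xy; have := maxsetp maxX => /forall_inP /(_ x Hx) /forall_inP /(_ y Hy).
  by rewrite xy.
have Xm : #|X| < 2 * m := few_centers m0 s0 Hs Hd pwX.
have Hc : forall p, p \notin X -> exists2 x, x \in X & s <= #|Nb p :&: Nb x|.
  move=> p pX; case: (pickP [pred x in X | s <= #|Nb p :&: Nb x|]) => [x /andP [] | H0].
    by exists x.
  exfalso; have : pw (p |: X).
    apply/forall_inP => a Ha; apply/forall_inP => b Hb; apply/implyP.
    move: Ha Hb => /setU1P [-> | Ha] /setU1P [-> | Hb] ab.
    - by rewrite eqxx in ab.
    - by have := H0 b; rewrite /= Hb /= leqNgt => /negbFE.
    - by have := H0 a; rewrite /= Ha /= leqNgt setIC => /negbFE.
    - exact: pwX.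
  move=> /(maxsetsup maxX) /(_ (subsetUr _ _)) E.
  by move: pX; rewrite -E setU11.
pose c (p : T) := odflt p [pick x in X | s <= #|Nb p :&: Nb x|].
have cX p : p \notin X -> c p \in X /\ s <= #|Nb p :&: Nb (c p)|.
  move=> pX; rewrite /c; case: pickP => [x /andP [] | H0] //=.
  by have [x Hx Hs'] := Hc p pX; have := H0 x; rewrite /= Hx Hs'.
set t := 2 * ((s - 2 * m) %/ 2).
have ts : t <= s - 2 * m by rewrite /t mulnC leq_trunc_div.
pose S p := if p \in X then [set: T] else (Nb p :&: Nb (c p)) :\: X.
have HS p : t <= #|S p|.
  rewrite /S; case: ifP => pX; first by rewrite cardsT; lia.
  have [_ H] := cX p (negbT pX).
  rewrite cardsD; have : #|(Nb p :&: Nb (c p)) :&: X| <= #|X| by apply: subset_leq_card; apply: subsetIr.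
  lia.
have Harith : n * 11.+1 * 11 ^ t < 11.+1 ^ t by apply: arith m0 (ltnW Hn).
have [h Hh] := good_colouring HS Harith.
pose gam q := (h q %/ 4)%N. pose lam q := (h q %% 4)%N.
have gam3 q : gam q < 3 by rewrite /gam ltn_divLR //; apply: ltn_ord.
have conn p l : p \notin X -> l < 4 -> exists q, [/\ e p q, e (c p) q, q \notin X,
    gam q = (gam p).+1 %% 3 & lam q = l].
  move=> pX l4.
  have hb : 4 * ((gam p).+1 %% 3) + l < 12.
    have : (gam p).+1 %% 3 < 3 by rewrite ltn_mod.
    lia.
  have [q Hq Ehq] := Hh p (inord (4 * ((gam p).+1 %% 3) + l)).
  have Vq : (h q : nat) = 4 * ((gam p).+1 %% 3) + l by rewrite Ehq inordK.
  move: Hq; rewrite /S (negbTE pX) !inE => /andP [qX /andP [E1 E2]].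
  exists q; split => //.
    by rewrite /gam Vq mulnC divnMDl // divn_small // addn0.
  by rewrite /lam Vq mulnC modnMDl modn_small.
pose chiN p q : nat :=
  if p \in X then (if q \in X then 0 else cen (lam q))
  else if q \in X then cen (lam p)
  else if gam q == (gam p).+1 %% 3 then lnk (lam q)
  else if gam p == (gam q).+1 %% 3 then lnk (lam p) else 0.
pose chi p q : colour := inord (chiN p q).
have chisym : edge_colouring chi.
  move=> p q; rewrite /chi /chiN.
  case: (p \in X); case: (q \in X) => //.
  case: ifP => A; case: ifP => B //.
  by exfalso; apply: (gam_asym (gam3 p) (gam3 q)); rewrite ?A ?B.
pose kap (p : T) := if p \in X then (p, true) else (c p, false).
exists (preim_partition kap [set: T]), chi; split => //.
- exact: preim_partitionP.
- rewrite /preim_partition /equivalence_partition.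
  rewrite (eq_imset _ (_ : _ =1 (fun k => [set y in [set: T] | k == kap y]) \o kap)) // imset_comp.
  apply: leq_trans (leq_imset_card _ _) _.
  apply: (@leq_trans #|setX X [set: bool]|).
    apply: subset_leq_card; apply/subsetP => k /imsetP [p _ ->].
    rewrite /kap; case: ifP => pX; rewrite inE /= ?pX ?inE //.
    by have [-> _] := cX p (negbT pX).
  rewrite cardsX cardsT card_bool.
  have : 4 * m <= M * (2 * m) by apply: (leq_trans _ (leq_mul M4 (leqnn (2 * m)))); lia.
  have : M * (2 * m) <= Nval m.
    by rewrite /Nval -/M leq_mul2l; apply/orP; right; lia.
  lia.
move=> A /imsetP [x _ ->] u v; rewrite !inE /= => /eqP Eu /eqP Ev.
have Kuv : kap u = kap v by rewrite -Eu -Ev.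
case: (boolP (u \in X)) => uX.
  have vX : v \in X by move: Kuv; rewrite /kap uX; case: (v \in X).
  move: Kuv; rewrite /kap uX vX => [[<-]].
  by split; exists [::]; rewrite /= eqxx.
have vX : v \notin X by move: Kuv; rewrite /kap (negbTE uX); case: (v \in X).
move: Kuv; rewrite /kap (negbTE uX) (negbTE vX) => [[Ecuv]].
have [cuX _] := cX u uX.
have ux : u != c u by apply: contraNneq uX => ->.
have vx : v != c u by apply: contraNneq vX => ->.
have Ecol p q : p \notin X -> q \notin X -> gam q = (gam p).+1 %% 3 ->
    chi p q = inord (lnk (lam q)).
  move=> pX qX Eg; by rewrite /chi /chiN (negbTE pX) (negbTE qX) Eg eqxx.
have Ecol2 p q : p \notin X -> q \notin X -> gam p = (gam q).+1 %% 3 ->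
    chi p q = inord (lnk (lam p)).
  move=> pX qX Eg; rewrite /chi /chiN (negbTE pX) (negbTE qX) Eg.
  by rewrite gam_not2 // eqxx.
have Ecen y q : y \in X -> q \notin X -> chi y q = inord (cen (lam q)).
  by move=> yX qX; rewrite /chi /chiN yX (negbTE qX).
have Ecen2 y q : y \in X -> q \notin X -> chi q y = inord (cen (lam q)).
  by move=> yX qX; rewrite /chi /chiN yX (negbTE qX).
have mk l1 l2 : l1 < 4 -> l2 < 4 -> l1 != l2 ->
   (forall P : pred colour, uniq [:: (inord (lnk l1) : colour); inord (cen l1); inord (cen l2); inord (lnk l2)] ->
     all P [:: (inord (lnk l1) : colour); inord (cen l1); inord (cen l2); inord (lnk l2)] ->
     rainbow_connected_in e chi P u v).
  move=> l14 l24 l12 P U Al.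
  have [q1 [E1 E1' q1X G1 L1]] := conn u l1 uX l14.
  have [q2 [E2 E2' q2X G2 L2]] := conn v l2 vX l24.
  rewrite -Ecuv in E2'.
  apply: (path4 (x := c u) (q1 := q1) (q2 := q2) sym irr chisym) => //.
  - by rewrite sym.
  - by rewrite sym.
  - by apply: contra_neq l12 => E; rewrite -L1 -L2 E.
  - by rewrite (Ecol _ _ uX q1X G1) (Ecen2 _ _ cuX q1X) (Ecen _ _ cuX q2X) (Ecol2 _ _ q2X vX G2) L1 L2.
  - by rewrite (Ecol _ _ uX q1X G1) (Ecen2 _ _ cuX q1X) (Ecen _ _ cuX q2X) (Ecol2 _ _ q2X vX G2) L1 L2.
split.
- apply: (mk 0 1) => //.
    by rewrite -(map_inj_uniq val_inj) /= /lnk /cen /= !inordK.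
  by rewrite /= /is_a_colour /lnk /cen /= !inordK.
- apply: (mk 2 3) => //.
    by rewrite -(map_inj_uniq val_inj) /= /lnk /cen /= !inordK.
  by rewrite /= /is_b_colour /lnk /cen /= !inordK.
Qed.

Local Open Scope ring_scope.

Theorem lemma3p6 (R : realType) (eps : R) (heps : 0 < eps) :
  exists N : nat,
    forall (T : finType) (e : rel T),
      simple_graph e -> connected_graph e ->
      (N < #|T|)%N ->
      (forall x : T, eps * (#|T|)%:R <= (degree e x)%:R) ->
      exists (P : {set {set T}}) (chi : T -> T -> colour),
        [/\ partition P [set: T], (#|P| <= N)%N, edge_colouring chi &
          forall A, A \in P -> forall u v, u \in A -> v \in A ->
            a_rainbow_connected e chi u v /\ b_rainbow_connected e chi u v].
Proof.
set b := Num.bound (eps^-1).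
have hb : eps^-1 < b%:R by apply: archi_boundP; rewrite invr_ge0 ltW.
have h1 : 1 <= b.+1%:R * eps.
  have : eps^-1 * eps < b%:R * eps by rewrite ltr_pM2r.
  rewrite mulVf ?gt_eqF // => H; apply: ltW; apply: lt_le_trans H _.
  by rewrite ler_pM2r // ler_nat.
exists (Nval b.+1) => T e [sym irr] _ Hn Hdeg.
apply: main_nat => // x.
rewrite -(ler_nat R) natrM.
apply: (@le_trans _ _ (b.+1%:R * (eps * (#|T|)%:R))).
  by rewrite mulrA; apply: ler_peMl.
by apply: ler_wpM2l => //; apply: Hdeg.
Qed.
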